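(* Let $\tilde\beta$ be a minimizer over $b\in\mathbb R^q$ of $G(b;\lambda_2)=\frac1{2n}\|y-Xb\|^2+\frac12\lambda_2b'Lb$, where $\lambda_2\ge0$, and let $\tilde r=y-X\tilde\beta$. Then (i) $\lambda_2\max_{1\le j\le q}|d_j\tilde\beta_j-a_j'\tilde\beta|\le\|\tilde r\|\le\|y\|$ (equivalently, when all $d_j>0$, $\lambda_2\max_j d_j|\tilde\beta_j-a_j'\tilde\beta/d_j|\le\|\tilde r\|\le\|y\|$); (ii) for all $1\le j,k\le q$, $\lambda_2\,|d_j\tilde\beta_j-a_j'\tilde\beta-(d_k\tilde\beta_k-a_k'\tilde\beta)|\le\frac1n\|x_j-x_k\|\,\|y\|$.
   Context: $y\in\mathbb R^n$, $X=(x_1,\dots,x_q)\in\mathbb R^{n\times q}$ with $\|x_j\|^2=n$ for all $j$. $A=(a_{jk})$ is a symmetric $q\times q$ real matrix with zero diagonal, $a_j$ denotes its $j$th row (as a column vector), $d_j=\sum_k|a_{jk}|$, $L=\operatorname{diag}(d_1,\dots,d_q)-A$, so that $b'Lb=\sum_{j<k}|a_{jk}|(b_j-\operatorname{sgn}(a_{jk})b_k)^2$ and $(Lb)_j=d_jb_j-a_j'b$. *)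

(* Defs.v *)
From HB Require Import structures.
From mathcomp Require Import all_boot all_order all_algebra.
Set Implicit Arguments. Unset Strict Implicit. Unset Printing Implicit Defensive.
Import Order.TTheory GRing.Theory Num.Theory.
Local Open Scope ring_scope.

Definition norm2 {R : rcfType} {n : nat} (v : 'cV[R]_n) : R :=
  Num.sqrt (\sum_(i < n) v i 0 ^+ 2).

Definition dgr {R : rcfType} {q : nat} (A : 'M[R]_q) (j : 'I_q) : R :=
  \sum_(k < q) `|A j k|.

Definition Lap {R : rcfType} {q : nat} (A : 'M[R]_q) : 'M[R]_q :=
  diag_mx (\row_j dgr A j) - A.

Definition Gobj {R : rcfType} {n q : nat} (y : 'cV[R]_n) (X : 'M[R]_(n, q))
  (A : 'M[R]_q) (lam : R) (b : 'cV[R]_q) : R :=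
  (2 * n%:R)^-1 * norm2 (y - X *m b) ^+ 2
  + 2^-1 * lam * (b^T *m Lap A *m b) 0 0.

(* Main.v *)
Require Import Defs.
From HB Require Import structures.
From mathcomp Require Import all_boot all_order all_algebra.
From mathcomp Require Import ring lra.
Import Order.TTheory GRing.Theory Num.Theory.
Local Open Scope ring_scope.

Section S1.
Variable R : rcfType.

Definition dot {m} (u v : 'cV[R]_m) : R := \sum_i u i 0 * v i 0.

Lemma dotC {m} (u v : 'cV[R]_m) : dot u v = dot v u.
Proof. by apply: eq_bigr => i _; rewrite mulrC. Qed.

Lemma dotDl {m} (u v w : 'cV[R]_m) : dot (u + v) w = dot u w + dot v w.
Proof. by rewrite /dot -big_split; apply: eq_bigr => i _; rewrite mxE mulrDl. Qed.

Lemma dotNl {m} (u w : 'cV[R]_m) : dot (- u) w = - dot u w.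
Proof. by rewrite /dot -sumrN; apply: eq_bigr => i _; rewrite mxE mulNr. Qed.

Lemma dotZl {m} a (u w : 'cV[R]_m) : dot (a *: u) w = a * dot u w.
Proof. by rewrite /dot mulr_sumr; apply: eq_bigr => i _; rewrite mxE mulrA. Qed.

Lemma dotDr {m} (u v w : 'cV[R]_m) : dot w (u + v) = dot w u + dot w v.
Proof. by rewrite !(dotC w) dotDl. Qed.
Lemma dotNr {m} (u w : 'cV[R]_m) : dot w (- u) = - dot w u.
Proof. by rewrite !(dotC w) dotNl. Qed.
Lemma dotZr {m} a (u w : 'cV[R]_m) : dot w (a *: u) = a * dot w u.
Proof. by rewrite !(dotC w) dotZl. Qed.

Lemma dot_ge0 {m} (u : 'cV[R]_m) : 0 <= dot u u.
Proof. by apply: sumr_ge0 => i _; rewrite -expr2 sqr_ge0. Qed.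

Lemma norm2_sq {m} (u : 'cV[R]_m) : norm2 u ^+ 2 = dot u u.
Proof.
rewrite /norm2 sqr_sqrtr; last exact: dot_ge0.
by apply: eq_bigr => i _; rewrite expr2.
Qed.

Lemma norm2_dot {m} (u : 'cV[R]_m) : norm2 u = Num.sqrt (dot u u).
Proof. by rewrite /norm2; congr Num.sqrt; apply: eq_bigr => i _; rewrite expr2. Qed.

Lemma mxdot {m} (u v : 'cV[R]_m) : (u^T *m v) 0 0 = dot u v.
Proof. by rewrite mxE; apply: eq_bigr => i _; rewrite mxE. Qed.

Lemma CS2 {m} (u v : 'cV[R]_m) : dot u v ^+ 2 <= dot u u * dot v v.
Proof.
have [v0|vn0] := eqVneq (dot v v) 0.
  have : forall i, v i 0 = 0.
    move=> i; have /psumr_eq0P H := v0.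
    have := H (fun k _ => sqr_ge0 (v k 0)) i isT.
    by move=> /eqP; rewrite mulf_eq0 orbb => /eqP.
  move=> vz; rewrite v0 mulr0 /dot big1 ?expr0n //= => i _.
  by rewrite vz mulr0.
set t := dot u v / dot v v.
have := dot_ge0 (u - t *: v).
rewrite !(dotDl, dotDr, dotNl, dotNr, dotZl, dotZr) (dotC v u) => H.
have hv : 0 < dot v v by rewrite lt0r vn0 dot_ge0.
have : 0 <= dot u u - dot u v ^+2 / dot v v.
  apply: (le_trans H); rewrite le_eqVlt; apply/orP; left; apply/eqP.
  by rewrite /t; field; rewrite vn0.
rewrite subr_ge0 ler_pdivrMr //.
Qed.

Lemma CS {m} (u v : 'cV[R]_m) : `|dot u v| <= norm2 u * norm2 v.
Proof.
rewrite !norm2_dot -sqrtrM ?dot_ge0 // -sqrtr_sqr ler_sqrt; last first.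
  by apply: mulr_ge0; apply: dot_ge0.
exact: CS2.
Qed.

End S1.
Arguments dot {R m}.

Section S2.
Variable R : rcfType.

Lemma quad0 (c1 c2 : R) : (forall t, 0 <= t * c1 + t ^+ 2 * c2) -> c1 = 0.
Proof.
move=> H.
set k := `|c2| + 1.
have kp : 0 < k by rewrite /k ltr_pwDr // normr_ge0.
have := H (- c1 / k) => H1.
have H2 : 0 <= (- c1 / k * c1 + (- c1 / k) ^+ 2 * c2) * k ^+ 2.
  by apply: mulr_ge0 => //; rewrite sqr_ge0.
have E : (- c1 / k * c1 + (- c1 / k) ^+ 2 * c2) * k ^+ 2 = c1 ^+ 2 * (c2 - k).
  by field; rewrite gt_eqF.
rewrite E in H2.
have hc : c2 <= `|c2| := ler_norm c2.
have : c1 ^+ 2 <= 0 by rewrite /k in H2; nra.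
move=> h; have : c1 ^+ 2 == 0 by rewrite eq_le h sqr_ge0.
by rewrite sqrf_eq0 => /eqP.
Qed.

Lemma Lap_mul q (A : 'M[R]_q) (b : 'cV[R]_q) j :
  (Lap A *m b) j 0 = dgr A j * b j 0 - \sum_(k < q) A j k * b k 0.
Proof.
rewrite /Lap mulmxBl mxE mul_diag_mx !mxE.
by [].
Qed.

Lemma Lap_tr q (A : 'M[R]_q) : A^T = A -> (Lap A)^T = Lap A.
Proof. by move=> HA; rewrite /Lap linearB /= tr_diag_mx HA. Qed.

Lemma Lap_psd q (A : 'M[R]_q) (b : 'cV[R]_q) : A^T = A ->
  0 <= dot b (Lap A *m b).
Proof.
move=> HA.
have Hs : forall j k, A k j = A j k.
  by move=> j k; rewrite -[in RHS]HA mxE.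
pose f j k := `|A j k| * b j 0 ^+ 2 - A j k * b j 0 * b k 0.
have E : dot b (Lap A *m b) = \sum_j \sum_k f j k.
  rewrite /dot; apply: eq_bigr => j _.
  rewrite Lap_mul /dgr mulr_suml mulrBr !mulr_sumr -sumrB.
  by apply: eq_bigr => k _; rewrite /f; ring.
rewrite E.
have E2 : 2 * \sum_j \sum_k f j k = \sum_j \sum_k (f j k + f k j).
  rewrite mulr2n mulrDl mul1r.
  rewrite [X in _ + X = _]exchange_big /= -big_split /=.
  by apply: eq_bigr => j _; rewrite -big_split.
have : 0 <= 2 * \sum_j \sum_k f j k.
  rewrite E2; apply: sumr_ge0 => j _; apply: sumr_ge0 => k _.
  rewrite /f Hs.
  set a := A j k; set x := b j 0; set z := b k 0.
  have h1 : a * x * z <= `|a| * `|x| * `|z|.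
    by rewrite -!normrM; apply: ler_norm.
  have h2 : x ^+ 2 = `|x| ^+ 2 by rewrite real_normK ?num_real.
  have h3 : z ^+ 2 = `|z| ^+ 2 by rewrite real_normK ?num_real.
  have h4 : 0 <= `|a| := normr_ge0 a.
  have h5 : 0 <= `|a| * (`|x| - `|z|) ^+ 2 by apply: mulr_ge0; rewrite ?sqr_ge0.
  rewrite h2 h3 (Hs j k) -/a; nra.
by rewrite pmulr_rge0.
Qed.

End S2.

Lemma dot_mul (R : rcfType) m p (M : 'M[R]_(m, p)) u v :
  dot u (M *m v) = dot (M^T *m u) v.
Proof. by rewrite -!mxdot mulmxA trmx_mul trmxK. Qed.

Lemma dot0l (R : rcfType) m (v : 'cV[R]_m) : dot 0 v = 0.
Proof. by rewrite /dot big1 // => i _; rewrite mxE mul0r. Qed.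

Lemma dot_delta (R : rcfType) m (j : 'I_m) (v : 'cV[R]_m) :
  dot (delta_mx j 0) v = v j 0.
Proof.
rewrite /dot (bigD1 j) //= big1 => [|i /negbTE hij]; rewrite mxE ?eqxx ?hij /=.
  by rewrite mul1r addr0.
by rewrite mul0r.
Qed.

Theorem proposition1 (R : rcfType) (n q : nat)
  (y : 'cV[R]_n) (X : 'M[R]_(n, q)) (A : 'M[R]_q) (lam : R)
  (beta : 'cV[R]_q) :
  (forall j : 'I_q, norm2 (col j X) ^+ 2 = n%:R) ->
  A^T = A ->
  (forall j : 'I_q, A j j = 0) ->
  0 <= lam ->
  (forall b : 'cV[R]_q, Gobj y X A lam beta <= Gobj y X A lam b) ->
  let r := y - X *m beta in
  let Lb := fun j : 'I_q => dgr A j * beta j 0 - \sum_(k < q) A j k * beta k 0 in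
  ((forall j : 'I_q, lam * `|Lb j| <= norm2 r) /\ norm2 r <= norm2 y) /\
  (forall j k : 'I_q,
      lam * `|Lb j - Lb k| <= n%:R^-1 * norm2 (col j X - col k X) * norm2 y).
Proof.
move=> HX HA Hd Hl Hmin r Lb.
have Hr : y - X *m beta = r by [].
clearbody r.
have GE : forall b, Gobj y X A lam b = (2 * n%:R)^-1 * dot (y - X *m b) (y - X *m b)
    + 2^-1 * lam * dot b (Lap A *m b).
  by move=> b; rewrite /Gobj norm2_sq -mulmxA mxdot.
have FOC : forall j, lam * Lb j = n%:R^-1 * dot (col j X) r.
  move=> j.
  set e : 'cV[R]_q := delta_mx j 0.
  set w := col j X.
  have Hw : X *m e = w by rewrite /w colE.
  set c1 := (2 * n%:R)^-1 * (- (2 * dot w r)) + 2^-1 * lam * (2 * dot e (Lap A *m beta)).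
  set c2 := (2 * n%:R)^-1 * dot w w + 2^-1 * lam * dot e (Lap A *m e).
  have c10 : c1 = 0.
    apply: (@quad0 _ _ c2) => t.
    have := Hmin (beta + t *: e).
    rewrite !GE mulmxDr -scalemxAr Hw opprD addrA Hr.
    rewrite mulmxDr -scalemxAr.
    rewrite !(dotDl, dotDr, dotNl, dotNr, dotZl, dotZr).
    rewrite [dot beta (Lap A *m e)]dot_mul (@Lap_tr _ _ _ HA) (dotC _ (Lap A *m beta)) (dotC _ r w).
    rewrite -subr_ge0 => H; apply: (le_trans H); rewrite le_eqVlt; apply/orP; left.
    by apply/eqP; rewrite /c1 /c2; ring.
  move: c10; rewrite /c1 dot_delta Lap_mul -/(Lb j) invfM.
  move: (n%:R^-1) => ni; move: (Lb j) (dot w r) => L d h.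
  apply/eqP; rewrite -subr_eq0 -h; apply/eqP; by field.
have Hry : norm2 r <= norm2 y.
  have [n0|np] := eqVneq n 0%N.
    subst n; rewrite !norm2_dot /dot !big_ord0 //.
  have := Hmin 0; rewrite !GE mulmx0 subr0 dot0l mulr0 addr0 Hr.
  have hp : 0 <= 2^-1 * lam * dot beta (Lap A *m beta).
    by apply: mulr_ge0; [apply: mulr_ge0 => //; rewrite invr_ge0 ler0n|exact: Lap_psd].
  have hn : 0 < (2 * n%:R)^-1 :> R.
    by rewrite invr_gt0 mulr_gt0 // ltr0n lt0n np.
  move=> H.
  have : (2 * n%:R)^-1 * dot r r <= (2 * n%:R)^-1 * dot y y.
    by apply: le_trans H; rewrite lerDl.
  rewrite ler_pM2l // => H2.
  by rewrite !norm2_dot ler_sqrt // dot_ge0.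
have Hni : 0 <= n%:R^-1 :> R by rewrite invr_ge0 ler0n.
have Hlb : forall j, lam * `|Lb j| = n%:R^-1 * `|dot (col j X) r|.
  move=> j; rewrite -(ger0_norm Hl) -normrM FOC normrM (ger0_norm Hni) //.
have Hw1 : forall j, n%:R^-1 * norm2 (col j X) <= 1 :> R.
  move=> j; have := HX j; have := (sqrtr_ge0 (\sum_(i < n) (col j X) i 0 ^+ 2)).
  rewrite -/(norm2 (col j X)); move: (norm2 (col j X)) => s s0 hs.
  have [n0|np] := eqVneq n 0%N.
    by rewrite n0 invr0 mul0r ler01.
  have hn : 1 <= n%:R :> R by rewrite ler1n lt0n np.
  have hnp : 0 < n%:R :> R by rewrite ltr0n lt0n np.
  rewrite ler_pdivrMl // mulr1 -hs.
  nra.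
split; [split=> // j|move=> j k].
  rewrite Hlb; apply: (le_trans (y := n%:R^-1 * (norm2 (col j X) * norm2 r))).
    by apply: ler_wpM2l => //; exact: CS.
  rewrite mulrA -[X in _ <= X]mul1r; apply: ler_wpM2r => //.
  by rewrite norm2_dot sqrtr_ge0.
have -> : lam * `|Lb j - Lb k| = n%:R^-1 * `|dot (col j X - col k X) r|.
  rewrite -(ger0_norm Hl) -normrM mulrBr !FOC -mulrBr normrM (ger0_norm Hni).
  by rewrite dotDl dotNl.
rewrite -mulrA; apply: ler_wpM2l => //.
apply: (le_trans (CS _ _ _)); apply: ler_wpM2l => //.
by rewrite norm2_dot sqrtr_ge0.
Qed.
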